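(* Let $G$ be a finite undirected graph, $\tau\ge1$ an integer, $v\in V(G)$, and $e=(u,v)\in E(G)$. Then $\phi_\tau(e,G)\ge|V(\Omega(v))|$.
   Context: Graphs are finite, simple, undirected and unweighted; paths may repeat vertices and their length is the number of edges. For vertices $v,u$ of a graph $H$, $u$ is $\tau$-hop reachable from $v$ in $H$ (written $u\rightarrow_\tau v$) if there is a path between them in $H$ of length at most $\tau$. $N_\tau(v,H)$ is the set of vertices $u\ne v$ that are $\tau$-hop reachable from $v$ in $H$. For an edge $e=(u,v)$ of $H$, $\Delta_\tau(e,H)=N_\tau(u,H)\cap N_\tau(v,H)$ and $\mathrm{sup}_\tau(e,H)=|\Delta_\tau(e,H)|$. The $(k,\tau)$-truss of $G$ is the maximal subgraph $G'$ of $G$ such that $\mathrm{sup}_\tau(e,G')\ge k-2$ for every $e\in E(G')$ (supports computed inside $G'$) and no more edges of $G$ can be added while keeping this property. The higher-order truss number $\phi_\tau(e,G)$ is the maximum $k$ such that $e$ belongs to the $(k,\tau)$-truss of $G$. The vertex centric $\tau$-diameter subgraph $\Omega(v)$ of $v$ is the subgraph of $G$ induced by $\{v\}\cup\{w : w\rightarrow_{\lfloor\tau/2\rfloor} v \text{ in } G\}$. *)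

(* Defs.v *)
(* Graphs: a finite type T of vertices with a symmetric,
   irreflexive boolean adjacency relation g. Subgraphs are represented by
   their (symmetric) sets of ordered edge pairs. *)
From mathcomp Require Import all_boot.
Set Implicit Arguments. Unset Strict Implicit. Unset Printing Implicit Defensive.

(* y is t-hop reachable from x along R: a walk x = x0, x1, ..., xn = y with
   R x_i x_{i+1} and n <= t (vertices may repeat). *)
Definition reach (T : finType) (R : rel T) (t : nat) (x y : T) : bool :=
  [exists n : 'I_t.+1, exists p : n.-tuple T, path R x p && (last x p == y)].

Definition Nt (T : finType) (R : rel T) (t : nat) (v : T) : {set T} :=
  [set w | (w != v) && reach R t v w].

Definition erel (T : finType) (E : {set T * T}) : rel T := fun a b => (a, b) \in E.

Definition gedges (T : finType) (g : rel T) : {set T * T} := [set p | g p.1 p.2].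

Definition sup (T : finType) (t : nat) (E : {set T * T}) (e : T * T) : nat :=
  #|Nt (erel E) t e.1 :&: Nt (erel E) t e.2|.

Definition kt_valid (T : finType) (g : rel T) (k t : nat) (E : {set T * T}) : bool :=
  [&& E \subset gedges g,
      [forall p in E, (p.2, p.1) \in E] &
      [forall p in E, k - 2 <= sup t E p]].

Definition kt_truss_mem (T : finType) (g : rel T) (k t : nat) (e : T * T) : bool :=
  [exists E : {set T * T},
    [&& kt_valid g k t E,
        [forall E' : {set T * T}, ((E \subset E') && kt_valid g k t E') ==> (E' == E)] &
        e \in E]].

(* higher-order truss number: the maximum k with e in the (k,t)-truss.
   (Any such k satisfies k <= #|T|, since supports are at most #|T| - 2,
   so the range bound #|T|.+3 loses nothing.) *)
Definition phi (T : finType) (g : rel T) (t : nat) (e : T * T) : nat :=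
  \max_(k < #|T|.+3 | kt_truss_mem g k t e) k.

Definition Omega_V (T : finType) (g : rel T) (t : nat) (v : T) : {set T} :=
  v |: [set w | reach g t./2 v w].

(* Main.v *)
Require Import Defs.
From mathcomp Require Import all_boot.

Lemma reachP (T : finType) (R : rel T) m x y :
  reflect (exists p : seq T, [/\ size p <= m, path R x p & last x p = y])
          (reach R m x y).
Proof.
apply: (iffP existsP).
  case=> n /existsP [p /andP [Hp /eqP Hl]].
  by exists (tval p); rewrite size_tuple -ltnS ltn_ord.
case=> p [Hs Hp Hl].
have Hn : size p < m.+1 by [].
exists (Ordinal Hn); apply/existsP; exists (in_tuple p).
by rewrite /= Hp Hl eqxx.
Qed.

Lemma reach_mono (T : finType) (R : rel T) m n x y :
  m <= n -> reach R m x y -> reach R n x y.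
Proof.
move=> mn /reachP [p [Hs Hp Hl]]; apply/reachP; exists p; split=> //.
exact: leq_trans Hs mn.
Qed.

Lemma reach_trans (T : finType) (R : rel T) m n x y z :
  reach R m x y -> reach R n y z -> reach R (m + n) x z.
Proof.
move=> /reachP [p [Hs Hp Hl]] /reachP [q [Hs' Hq Hl']].
apply/reachP; exists (p ++ q); split.
- by rewrite size_cat leq_add.
- by rewrite cat_path Hp Hl.
- by rewrite last_cat Hl.
Qed.

Lemma reach_sym (T : finType) (R : rel T) m x y :
  symmetric R -> reach R m x y -> reach R m y x.
Proof.
move=> Rs /reachP [p [Hs Hp Hl]]; apply/reachP.
exists (rev (belast x p)); split.
- by rewrite size_rev size_belast.
- rewrite -Hl rev_path; by under eq_path do rewrite Rs.
- case: p Hs Hp Hl => [|a p] /= Hs Hp Hl; first by rewrite Hl.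
  by rewrite rev_cons last_rcons.
Qed.

Lemma reach_in (T : finType) (R : rel T) m x p y :
  path R x p -> size p <= m -> y \in p -> reach R m x y.
Proof.
move=> Hp Hs Hy; apply/reachP.
set i := index y p.
have Hi : i < size p by rewrite index_mem.
exists (take i.+1 p); split.
- by apply: leq_trans _ Hs; rewrite size_take_min geq_minr.
- exact: take_path.
- rewrite (last_nth x) size_take_min (minn_idPl Hi) /= nth_take //.
  by rewrite nth_index.
Qed.

Arguments reach_in {T R m x p y}.
Arguments reach_mono {T R m n x y}.
Arguments reach_trans {T R m n x y z}.
Arguments reach_sym {T R m x y}.

Lemma phi_ge (T : finType) (g : rel T) (t k : nat) (E0 : {set T * T}) e :
  kt_valid g k t E0 -> e \in E0 -> k < #|T|.+3 -> k <= phi g t e.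
Proof.
move=> HV0 He Hk.
pose P := (fun E : {set T * T} => kt_valid g k t E && (E0 \subset E)).
have P0 : P E0 by rewrite /P HV0 subxx.
case: (@arg_maxnP _ E0 P (fun E : {set T * T} => #|E|) P0) => E /andP [HV HE0] Hmax.
rewrite /phi.
have -> : k = nat_of_ord (Ordinal Hk) by [].
apply: leq_bigmax_cond.
apply/existsP; exists E; rewrite HV /=; apply/andP; split; last exact: (subsetP HE0).
apply/forallP => E'; apply/implyP => /andP [HEE' HV'].
have HE'E : #|E'| <= #|E| by apply: Hmax; rewrite /P HV' (subset_trans HE0 HEE').
by rewrite eq_sym eqEcard HEE' HE'E.
Qed.

Theorem lemma4 (T : finType) (g : rel T) (gsym : symmetric g)
    (girr : irreflexive g) (t : nat) (ht : 1 <= t) (u v : T) (huv : g u v) :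
  #|Omega_V g t v| <= phi g t (u, v).
Proof.
set S := Omega_V g t v.
have HSle : #|S| < #|T|.+3 by apply: leq_trans (max_card _) _; rewrite ltnW // ltnW.
case: (ltngtP t 1) => [|ht2|ht1]; first by rewrite ltnNge ht.
-
  set E0 := [set p : T * T | [&& g p.1 p.2, p.1 \in S & p.2 \in S]].
  have E0sym : symmetric (erel E0).
    move=> a b; rewrite /erel !inE /= gsym; by case: (g b a) => //=; rewrite andbC.
  have HvS : v \in S by rewrite !inE eqxx.
  have Hv : forall w, w \in S -> reach (erel E0) t./2 v w.
    move=> w; rewrite !inE => /orP [/eqP -> | /reachP [p [Hs Hp Hl]]].
      by apply/reachP; exists [::].
    apply/reachP; exists p; split => //.
    have Hsub : {in mem S &, subrel g (erel E0)}.
      by move=> a b Ha Hb Hab; rewrite /erel inE /= Hab Ha Hb.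
    have HallS : all (mem S) (v :: p).
      apply/allP => y; rewrite in_cons => /orP [/eqP -> //| Hy].
      by rewrite !inE (reach_in Hp Hs Hy) orbT.
    exact: (sub_in_path Hsub HallS Hp).
  have Hall : forall a w, a \in S -> w \in S -> reach (erel E0) t a w.
    move=> a w Ha Hw.
    apply: (reach_mono _ (reach_trans (reach_sym E0sym (Hv a Ha)) (Hv w Hw))).
    by rewrite addnn -{2}(odd_double_half t) leq_addl.
  apply: (@phi_ge T g t #|S| E0 (u, v)) => //; last first.
    rewrite inE /= huv HvS /= !inE andbT; apply/orP; right.
    apply/reachP; exists [:: u]; split => //=; first by rewrite -(half_double 1) half_leq.
    by rewrite gsym huv.
  apply/and3P; split.
  + by apply/subsetP => p; rewrite !inE => /andP [].
  + apply/forallP => p; apply/implyP => Hp.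
    by move: (E0sym p.1 p.2); rewrite /erel -surjective_pairing => <-.
  + apply/forallP => [[a b]]; apply/implyP; rewrite inE /= => /and3P [Hab Ha Hb].
    have Hneq : a != b by apply/eqP => Eab; move: Hab; rewrite Eab girr.
    rewrite /sup /=.
    have Hsub : S :\ a :\ b \subset Nt (erel E0) t a :&: Nt (erel E0) t b.
      apply/subsetP => w; rewrite !in_setD1 => /and3P [Hwb Hwa Hw].
      by rewrite in_setI /Nt !inE Hwb Hwa !Hall.
    apply: leq_trans (subset_leq_card Hsub).
    rewrite leq_subLR (cardsD1 a S) Ha (cardsD1 b (S :\ a)) in_setD1 eq_sym Hneq Hb.
    by rewrite addnA.
-
  subst t.
  have HS : S \subset [set v].
    apply/subsetP => w; rewrite !inE => /orP [//| /reachP [[|a p] [Hs Hp Hl]]] //.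
    by rewrite -Hl.
  apply: (@leq_trans 1); first by rewrite -(cards1 v) subset_leq_card.
  apply: (@phi_ge T g 1 1 (gedges g) (u, v)) => //; last by rewrite inE.
  apply/and3P; split => //.
  + apply/forallP => p; apply/implyP; rewrite !inE => Hp.
    by rewrite /= gsym.
  + by apply/forallP => p; apply/implyP.
Qed.
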